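(* Let $\tau\in F_2$ and let $Z=X+\tau Y\in\mathbb{C}^2$ with $X=(x_1,x_2),Y=(y_1,y_2)\in\mathbb{R}^2$, $(X,Y)\ne(0,0)$, $\|(X,Y)\|:=\max\{|x_1|,|x_2|,|y_1|,|y_2|\}\le\frac12$, and $\theta_{a,b}(Z,\tau)\neq 0$ for $a=(\tfrac12,\tfrac12)$, $b=(0,\tfrac12)$. Put $\Lambda(Z)=-\log\big(|\theta_{a,b}(Z,\tau)|\,e^{-\pi\,{}^t\operatorname{Im}Z(\operatorname{Im}\tau)^{-1}\operatorname{Im}Z}\big)$ and $\delta(a+Y)=\min\{d(\tfrac12+y_1,\mathbb{Z}),d(\tfrac12+y_2,\mathbb{Z})\}$. Then $$\Lambda(Z)\ge \pi\big(\operatorname{Tr}(\operatorname{Im}\tau)-2\operatorname{Im}\tau_{12}\big)\delta(a+Y)^2-\log\Big(4+\frac32\operatorname{Tr}(\operatorname{Im}\tau)\Big)+\log\frac{1}{\|(X,Y)\|}-\log C_3(Y),$$ where $C_3(Y)=\max_{i\in\{1,2\}}8\pi\Big(\frac4\pi+2|y_i|+\frac12\Big(\sqrt{y_i^2+\frac8\pi}+2\Big)^2+\frac12\Big)$ (in particular $C_3(Y)\le 239{,}2$).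
   Context: $F_2$ is the standard Siegel fundamental domain for $\mathrm{Sp}_4(\mathbb{Z})$ acting on symmetric complex $2\times2$ matrices $\tau=\begin{pmatrix}\tau_1&\tau_{12}\\ \tau_{12}&\tau_2\end{pmatrix}$ with $\operatorname{Im}\tau>0$; every $\tau\in F_2$ satisfies $|\operatorname{Re}\tau_{ij}|\le 1/2$, $\operatorname{Im}\tau_2\ge\operatorname{Im}\tau_1\ge 2\operatorname{Im}\tau_{12}\ge 0$, $\operatorname{Im}\tau_1\ge\sqrt3/2$. Theta function with characteristic $a,b\in\{0,\frac12\}^2$: $\theta_{a,b}(Z,\tau)=\sum_{n\in\mathbb{Z}^2}\exp\big(2i\pi(\tfrac12{}^t(n+a)\tau(n+a)+{}^t(n+a)(Z+b))\big)$. $d(x,\mathbb{Z})$ is the distance from $x$ to the nearest integer. *)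

(* Defs.v *)
From Stdlib Require Import Reals ZArith.
Open Scope R_scope.

Definition Cx : Type := (R * R)%type.
Definition Cre (z : Cx) : R := fst z.
Definition Cim (z : Cx) : R := snd z.
Definition RtoC (x : R) : Cx := (x, 0).
Definition Cadd (z w : Cx) : Cx := (Cre z + Cre w, Cim z + Cim w).
Definition Csub (z w : Cx) : Cx := (Cre z - Cre w, Cim z - Cim w).
Definition Cmul (z w : Cx) : Cx :=
  (Cre z * Cre w - Cim z * Cim w, Cre z * Cim w + Cim z * Cre w).
Definition Cscal (r : R) (z : Cx) : Cx := (r * Cre z, r * Cim z).
Definition Cmod (z : Cx) : R := sqrt (Cre z ^ 2 + Cim z ^ 2).
Definition Cexp (z : Cx) : Cx :=
  (exp (Cre z) * cos (Cim z), exp (Cre z) * sin (Cim z)).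
Definition Ci : Cx := (0, 1).

Record M2Z := mkM2Z { e11 : Z; e12 : Z; e21 : Z; e22 : Z }.
Definition M2Z_mul (A B : M2Z) : M2Z :=
  mkM2Z (e11 A * e11 B + e12 A * e21 B)%Z (e11 A * e12 B + e12 A * e22 B)%Z
        (e21 A * e11 B + e22 A * e21 B)%Z (e21 A * e12 B + e22 A * e22 B)%Z.
Definition M2Z_tr (A : M2Z) : M2Z := mkM2Z (e11 A) (e21 A) (e12 A) (e22 A).
Definition M2Z_sub (A B : M2Z) : M2Z :=
  mkM2Z (e11 A - e11 B)%Z (e12 A - e12 B)%Z (e21 A - e21 B)%Z (e22 A - e22 B)%Z.
Definition M2Z_id : M2Z := mkM2Z 1 0 0 1.

(* (A B; C D) in Sp_4(Z), i.e. tM J M = J with J = (0 I; -I 0):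
   tA C = tC A, tB D = tD B, tA D - tC B = I. *)
Definition is_Sp4Z (A B Cm D : M2Z) : Prop :=
  M2Z_mul (M2Z_tr A) Cm = M2Z_mul (M2Z_tr Cm) A /\
  M2Z_mul (M2Z_tr B) D = M2Z_mul (M2Z_tr D) B /\
  M2Z_sub (M2Z_mul (M2Z_tr A) D) (M2Z_mul (M2Z_tr Cm) B) = M2Z_id.

Definition det_Ctau_D (Cm D : M2Z) (t1 t12 t2 : Cx) : Cx :=
  let c11 := RtoC (IZR (e11 Cm)) in let c12 := RtoC (IZR (e12 Cm)) in
  let c21 := RtoC (IZR (e21 Cm)) in let c22 := RtoC (IZR (e22 Cm)) in
  let m11 := Cadd (Cadd (Cmul c11 t1) (Cmul c12 t12)) (RtoC (IZR (e11 D))) in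
  let m12 := Cadd (Cadd (Cmul c11 t12) (Cmul c12 t2)) (RtoC (IZR (e12 D))) in
  let m21 := Cadd (Cadd (Cmul c21 t1) (Cmul c22 t12)) (RtoC (IZR (e21 D))) in
  let m22 := Cadd (Cadd (Cmul c21 t12) (Cmul c22 t2)) (RtoC (IZR (e22 D))) in
  Csub (Cmul m11 m22) (Cmul m12 m21).

Definition in_H2 (t1 t12 t2 : Cx) : Prop :=
  0 < Cim t1 /\ 0 < Cim t1 * Cim t2 - Cim t12 ^ 2.

(* Siegel's standard fundamental domain F_2 for Sp_4(Z):
   (i) |det(C tau + D)| >= 1 for all (A B; C D) in Sp_4(Z),
   (ii) Im tau Minkowski reduced: 0 <= 2 Im tau12 <= Im tau1 <= Im tau2,
   (iii) |Re tau_ij| <= 1/2. *)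
Definition in_F2 (t1 t12 t2 : Cx) : Prop :=
  in_H2 t1 t12 t2 /\
  (forall A B Cm D : M2Z, is_Sp4Z A B Cm D ->
     1 <= Cmod (det_Ctau_D Cm D t1 t12 t2)) /\
  (0 <= 2 * Cim t12 /\ 2 * Cim t12 <= Cim t1 /\ Cim t1 <= Cim t2) /\
  (Rabs (Cre t1) <= 1/2 /\ Rabs (Cre t12) <= 1/2 /\ Rabs (Cre t2) <= 1/2).

(* term for n = (n1, n2):
   exp(2 i pi (1/2 t(n+a) tau (n+a) + t(n+a)(Z + b))) *)
Definition theta_term (a1 a2 b1 b2 : R) (z1 z2 t1 t12 t2 : Cx) (n1 n2 : Z) : Cx :=
  let m1 := IZR n1 + a1 in let m2 := IZR n2 + a2 in
  let quad := Cadd (Cadd (Cscal (m1 * m1) t1) (Cscal (2 * m1 * m2) t12))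
                   (Cscal (m2 * m2) t2) in
  let lin := Cadd (Cscal m1 (Cadd z1 (RtoC b1))) (Cscal m2 (Cadd z2 (RtoC b2))) in
  let w := Cadd (Cscal (1/2) quad) lin in
  Cexp (Cmul (Cscal (2 * PI) Ci) w).

(* square partial sum over n in [-N, N]^2 *)
Definition theta_partial (a1 a2 b1 b2 : R) (z1 z2 t1 t12 t2 : Cx) (N : nat) : Cx :=
  let f i j := theta_term a1 a2 b1 b2 z1 z2 t1 t12 t2
                 (Z.of_nat i - Z.of_nat N)%Z (Z.of_nat j - Z.of_nat N)%Z in
  (sum_f_R0 (fun i => sum_f_R0 (fun j => Cre (f i j)) (2 * N)) (2 * N),
   sum_f_R0 (fun i => sum_f_R0 (fun j => Cim (f i j)) (2 * N)) (2 * N)).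

Definition is_theta (a1 a2 b1 b2 : R) (z1 z2 t1 t12 t2 : Cx) (th : Cx) : Prop :=
  Un_cv (fun N => Cre (theta_partial a1 a2 b1 b2 z1 z2 t1 t12 t2 N)) (Cre th) /\
  Un_cv (fun N => Cim (theta_partial a1 a2 b1 b2 z1 z2 t1 t12 t2 N)) (Cim th).

Definition distZ (x : R) : R :=
  Rmin (x - IZR (Int_part x)) (IZR (Int_part x) + 1 - x).

(* t(Im Z) (Im tau)^{-1} (Im Z) *)
Definition imZ_quad (t1 t12 t2 : Cx) (v1 v2 : R) : R :=
  let d := Cim t1 * Cim t2 - Cim t12 ^ 2 in
  (Cim t2 * v1 * v1 - 2 * Cim t12 * v1 * v2 + Cim t1 * v2 * v2) / d.

Definition C3_one (y : R) : R :=
  8 * PI * (4 / PI + 2 * Rabs y + 1/2 * (sqrt (y ^ 2 + 8 / PI) + 2) ^ 2 + 1/2).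
Definition C3 (y1 y2 : R) : R := Rmax (C3_one y1) (C3_one y2).

(* Main.v *)
Require Import Defs.
From Stdlib Require Import Reals ZArith Lra Lia Psatz.
Open Scope R_scope.


Fixpoint sumn (f : nat -> R) (n : nat) : R :=
  match n with O => 0 | S k => sumn f k + f k end.

Lemma sumn_ext (f g : nat -> R) n :
  (forall i, (i < n)%nat -> f i = g i) -> sumn f n = sumn g n.
Proof.
  induction n; intros H; simpl; auto.
  rewrite IHn by (intros; apply H; lia). rewrite H by lia. reflexivity.
Qed.

Lemma sumn_le (f g : nat -> R) n :
  (forall i, (i < n)%nat -> f i <= g i) -> sumn f n <= sumn g n.
Proof.
  induction n; intros H; simpl; [lra|].
  assert (sumn f n <= sumn g n) by (apply IHn; intros; apply H; lia).
  assert (f n <= g n) by (apply H; lia). lra.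
Qed.

Lemma sumn_nonneg (f : nat -> R) n :
  (forall i, (i < n)%nat -> 0 <= f i) -> 0 <= sumn f n.
Proof.
  intros H. replace 0 with (sumn (fun _ => 0) n).
  apply sumn_le; auto. induction n; simpl; auto. rewrite IHn; [lra|]. intros; apply H; lia.
Qed.

Lemma sumn_plus (f g : nat -> R) n :
  sumn (fun i => f i + g i) n = sumn f n + sumn g n.
Proof. induction n; simpl; [lra|]. rewrite IHn; ring. Qed.

Lemma sumn_scal (c : R) (f : nat -> R) n :
  sumn (fun i => c * f i) n = c * sumn f n.
Proof. induction n; simpl; [ring|]. rewrite IHn; ring. Qed.

Lemma sumn_shift (f : nat -> R) n :
  sumn f (S n) = f 0%nat + sumn (fun i => f (S i)) n.
Proof. induction n; simpl in *; [ring|]. rewrite IHn. ring. Qed.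

Lemma sumn_rev (f : nat -> R) n :
  sumn f n = sumn (fun i => f (n - 1 - i)%nat) n.
Proof.
  revert f; induction n; intros f; [reflexivity|].
  rewrite (sumn_shift (fun i => f (S n - 1 - i)%nat)).
  simpl sumn at 1. rewrite IHn.
  replace (S n - 1 - 0)%nat with n by lia.
  rewrite (sumn_ext (fun i => f (S n - 1 - S i)%nat) (fun i => f (n - 1 - i)%nat)).
  ring. intros; f_equal; lia.
Qed.

Lemma sumn_split (f : nat -> R) a b :
  sumn f (a + b) = sumn f a + sumn (fun i => f (a + i)%nat) b.
Proof.
  induction b.
  - rewrite Nat.add_0_r. simpl. ring.
  - rewrite Nat.add_succ_r. simpl. rewrite IHb. ring.
Qed.

Lemma sum_f_R0_sumn (f : nat -> R) n : sum_f_R0 f n = sumn f (S n).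
Proof. induction n; simpl; [ring|]. rewrite IHn. simpl. ring. Qed.

Lemma mod_triang (a b c d : R) :
  sqrt ((a + c) ^ 2 + (b + d) ^ 2) <= sqrt (a ^ 2 + b ^ 2) + sqrt (c ^ 2 + d ^ 2).
Proof.
  set (u := sqrt (a ^ 2 + b ^ 2)). set (v := sqrt (c ^ 2 + d ^ 2)).
  assert (Hu : 0 <= u) by apply sqrt_pos. assert (Hv : 0 <= v) by apply sqrt_pos.
  assert (Hu2 : u * u = a ^ 2 + b ^ 2) by (apply sqrt_sqrt; nra).
  assert (Hv2 : v * v = c ^ 2 + d ^ 2) by (apply sqrt_sqrt; nra).
  assert (Hcs : a * c + b * d <= u * v).
  { assert ((a*c+b*d)^2 <= (u*v)^2).
    { replace ((u*v)^2) with ((u*u)*(v*v)) by ring. rewrite Hu2, Hv2. pose proof (pow2_ge_0 (a*d-b*c)). nra. }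
    assert (0 <= u * v) by nra. nra. }
  rewrite <- (sqrt_pow2 (u + v)) by lra. apply sqrt_le_1_alt. nra.
Qed.

Lemma mod_sum (a b : nat -> R) n :
  sqrt (sumn a n ^ 2 + sumn b n ^ 2) <= sumn (fun i => sqrt (a i ^ 2 + b i ^ 2)) n.
Proof.
  induction n as [|n IHn]; cbn [sumn].
  - replace (0 ^ 2 + 0 ^ 2) with 0 by ring. rewrite sqrt_0. lra.
  - eapply Rle_trans. apply mod_triang. lra.
Qed.

Lemma sqrt_le_sq (L Rr : R) : 0 <= Rr -> L <= Rr ^ 2 -> sqrt L <= Rr.
Proof. intros. rewrite <- (sqrt_pow2 Rr) by lra. apply sqrt_le_1_alt; lra. Qed.




Lemma cos_odd (x : R) (k : Z) : cos (x + (2 * IZR k + 1) * PI) = - cos x.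
Proof.
  replace (x + (2 * IZR k + 1) * PI) with ((x + 2 * IZR k * PI) + PI) by ring.
  rewrite neg_cos. f_equal.
  destruct (Z_lt_le_dec k 0) as [Hk|Hk].
  - assert (k = - Z.of_nat (Z.to_nat (- k)))%Z as E by lia.
    rewrite E, opp_IZR, <- INR_IZR_INZ.
    set (p := Z.to_nat (-k)).
    rewrite <- (cos_period (x + 2 * - INR p * PI) p). f_equal. ring.
  - assert (k = Z.of_nat (Z.to_nat k))%Z as E by lia.
    rewrite E, <- INR_IZR_INZ. apply cos_period.
Qed.

Lemma sin_sq_le (g : R) : sin g ^ 2 <= g ^ 2.
Proof.
  assert (H : forall g, 0 < g -> sin g ^ 2 <= g ^ 2).
  { intros h Hh. pose proof (sin_lt_x h Hh). pose proof (SIN_bound h).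
    destruct (Rle_dec 1 h).
    - nra.
    - assert (0 < sin h) by (apply sin_gt_0; pose proof PI2_1; lra). nra. }
  destruct (Rtotal_order g 0) as [Hg|[Hg|Hg]].
  - replace (sin g ^ 2) with (sin (-g) ^ 2) by (rewrite sin_neg; ring).
    replace (g ^ 2) with ((-g) ^ 2) by ring. apply H; lra.
  - subst. rewrite sin_0. lra.
  - apply H; lra.
Qed.

Lemma exp_diff_bound (s : R) :
  (exp s - exp (- s)) ^ 2 <= 4 * s ^ 2 * (exp s + exp (- s)) ^ 2.
Proof.
  set (X := exp s). set (Y := exp (- s)).
  assert (HXY : X * Y = 1) by (unfold X, Y; rewrite <- exp_plus; replace (s + - s) with 0 by ring; apply exp_0).
  assert (HX : 0 < X) by apply exp_pos. assert (HY : 0 < Y) by apply exp_pos.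
  assert (HX2 : 1 + 2 * s <= X * X) by (unfold X; rewrite <- exp_plus; pose proof (exp_ineq1_le (s + s)); lra).
  assert (HY2 : 1 - 2 * s <= Y * Y) by (unfold Y; rewrite <- exp_plus; pose proof (exp_ineq1_le (- s + - s)); lra).
  destruct (Rle_dec 0 s).
  - assert (X - Y = X * (1 - Y * Y)) by nra.
    assert (0 <= X - Y).
    { assert (1 <= X) by (unfold X; pose proof (exp_ineq1_le s); lra). nra. }
    assert (X - Y <= 2 * s * (X + Y)) by nra.
    nra.
  - assert (Y - X = Y * (1 - X * X)) by nra.
    assert (0 <= Y - X).
    { assert (1 <= Y) by (unfold Y; pose proof (exp_ineq1_le (-s)); lra). nra. }
    assert (Y - X <= - 2 * s * (X + Y)) by nra.
    nra.
Qed.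

Lemma pair_core (E al s g : R) (k : Z) : 0 <= E ->
  sqrt ((E * exp (- s) * cos (al + g + (IZR k * PI + PI / 2))
         + E * exp s * cos (al - g - (IZR k * PI + PI / 2))) ^ 2
      + (E * exp (- s) * sin (al + g + (IZR k * PI + PI / 2))
         + E * exp s * sin (al - g - (IZR k * PI + PI / 2))) ^ 2)
  <= (2 * Rabs s + Rabs g) * (E * exp (- s)) + (2 * Rabs s + Rabs g) * (E * exp s).
Proof.
  intros HE.
  set (A := al + g + (IZR k * PI + PI / 2)).
  set (B := al - g - (IZR k * PI + PI / 2)).
  set (X := exp s). set (Y := exp (- s)).
  assert (HXY : X * Y = 1) by (unfold X, Y; rewrite <- exp_plus; replace (s + - s) with 0 by ring; apply exp_0).
  assert (HX : 0 < X) by apply exp_pos. assert (HY : 0 < Y) by apply exp_pos.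
  assert (HA : cos A * cos A + sin A * sin A = 1) by (pose proof (sin2_cos2 A); unfold Rsqr in *; lra).
  assert (HB : cos B * cos B + sin B * sin B = 1) by (pose proof (sin2_cos2 B); unfold Rsqr in *; lra).
  assert (HAB : cos A * cos B + sin A * sin B = - (1 - 2 * sin g * sin g)).
  { rewrite <- cos_minus. rewrite <- cos_2a_sin. rewrite <- (cos_odd (2 * g) k).
    f_equal. unfold A, B. lra. }
  assert (Hd := exp_diff_bound s). fold X Y in Hd.
  assert (Hs := sin_sq_le g).
  assert (Hsum : 2 <= X + Y) by (pose proof (pow2_ge_0 (X - Y)); nra).
  apply sqrt_le_sq.
  - pose proof (Rabs_pos s); pose proof (Rabs_pos g). apply Rplus_le_le_0_compat; apply Rmult_le_pos; try apply Rmult_le_pos; lra.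
  - replace ((E * Y * cos A + E * X * cos B) ^ 2 + (E * Y * sin A + E * X * sin B) ^ 2)
      with (E * E * (Y * Y * (cos A * cos A + sin A * sin A) + X * X * (cos B * cos B + sin B * sin B)
            + 2 * (X * Y) * (cos A * cos B + sin A * sin B))) by ring.
    rewrite HA, HB, HAB, HXY.
    replace ((2 * Rabs s + Rabs g) * (E * Y) + (2 * Rabs s + Rabs g) * (E * X))
      with (E * (X + Y) * (2 * Rabs s + Rabs g)) by ring.
    assert (Y * Y * 1 + X * X * 1 + 2 * 1 * - (1 - 2 * sin g * sin g)
            = (X - Y) ^ 2 + 4 * sin g ^ 2) by nra.
    rewrite <- (pow2_abs s) in Hd. rewrite <- (pow2_abs g) in Hs.
    pose proof (Rabs_pos s); pose proof (Rabs_pos g).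
    assert (HXY2 : 4 <= (X + Y) ^ 2) by nra.
    assert (4 * sin g ^ 2 <= Rabs g ^ 2 * (X + Y) ^ 2).
    { assert (0 <= Rabs g ^ 2) by nra. nra. }
    assert (0 <= 4 * Rabs s * Rabs g * (X + Y) ^ 2).
    { apply Rmult_le_pos; [|nra]. nra. }
    assert (Y * Y * 1 + X * X * 1 + 2 * 1 * - (1 - 2 * sin g * sin g)
            <= (X + Y) ^ 2 * (2 * Rabs s + Rabs g) ^ 2).
    { rewrite H. replace ((X + Y) ^ 2 * (2 * Rabs s + Rabs g) ^ 2) with
       (4 * Rabs s ^ 2 * (X + Y) ^ 2 + Rabs g ^ 2 * (X + Y) ^ 2 + 4 * Rabs s * Rabs g * (X + Y) ^ 2) by ring.
      lra. }
    replace ((E * (X + Y) * (2 * Rabs s + Rabs g)) ^ 2) with (E * E * ((X + Y) ^ 2 * (2 * Rabs s + Rabs g) ^ 2)) by ring.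
    apply Rmult_le_compat_l; nra.
Qed.


Definition Qf (t1 t12 t2 : Cx) (m1 m2 : R) : R :=
  1/2 * (m1 * m1 * Cim t1 + 2 * m1 * m2 * Cim t12 + m2 * m2 * Cim t2).
Definition Pf (t1 t12 t2 : Cx) (m1 m2 : R) : R :=
  1/2 * (m1 * m1 * Cre t1 + 2 * m1 * m2 * Cre t12 + m2 * m2 * Cre t2).
Definition Lf (z1 z2 : Cx) (m1 m2 : R) : R := m1 * Cim z1 + m2 * Cim z2.
Definition Gf (z1 z2 : Cx) (m1 m2 : R) : R := m1 * Cre z1 + m2 * Cre z2.

Definition TT (t1 t12 t2 z1 z2 : Cx) (m1 m2 : R) : Cx :=
  (exp (-2 * PI * (Qf t1 t12 t2 m1 m2 + Lf z1 z2 m1 m2))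
     * cos (2 * PI * (Pf t1 t12 t2 m1 m2 + Gf z1 z2 m1 m2 + m2 / 2)),
   exp (-2 * PI * (Qf t1 t12 t2 m1 m2 + Lf z1 z2 m1 m2))
     * sin (2 * PI * (Pf t1 t12 t2 m1 m2 + Gf z1 z2 m1 m2 + m2 / 2))).

Lemma theta_term_TT (z1 z2 t1 t12 t2 : Cx) (n1 n2 : Z) :
  theta_term (1/2) (1/2) 0 (1/2) z1 z2 t1 t12 t2 n1 n2
  = TT t1 t12 t2 z1 z2 (IZR n1 + 1/2) (IZR n2 + 1/2).
Proof.
  unfold theta_term, TT, Qf, Pf, Lf, Gf, Cexp, Cmul, Cscal, Cadd, RtoC, Ci, Cre, Cim.
  simpl. generalize (IZR n1) (IZR n2); intros u v. f_equal; f_equal; try f_equal. all: field.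
Qed.

Definition Bd (t1 t12 t2 z1 z2 : Cx) (m1 m2 : R) : R :=
  (2 * Rabs (2 * PI * Lf z1 z2 m1 m2) + Rabs (2 * PI * Gf z1 z2 m1 m2))
  * exp (-2 * PI * (Qf t1 t12 t2 m1 m2 + Lf z1 z2 m1 m2)).

Lemma TT_pair (t1 t12 t2 z1 z2 : Cx) (m1 : R) (n2 : Z) :
  let m2 := IZR n2 + 1/2 in
  Cmod (Cadd (TT t1 t12 t2 z1 z2 m1 m2) (TT t1 t12 t2 z1 z2 (- m1) (- m2)))
  <= Bd t1 t12 t2 z1 z2 m1 m2 + Bd t1 t12 t2 z1 z2 (- m1) (- m2).
Proof.
  intros m2.
  set (E := exp (-2 * PI * Qf t1 t12 t2 m1 m2)).
  set (s := 2 * PI * Lf z1 z2 m1 m2).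
  set (g := 2 * PI * Gf z1 z2 m1 m2).
  set (al := 2 * PI * Pf t1 t12 t2 m1 m2).
  assert (HE : 0 <= E) by (left; apply exp_pos).
  pose proof (pair_core E al s g n2 HE) as H.
  assert (Q2 : Qf t1 t12 t2 (- m1) (- m2) = Qf t1 t12 t2 m1 m2) by (unfold Qf; ring).
  assert (P2 : Pf t1 t12 t2 (- m1) (- m2) = Pf t1 t12 t2 m1 m2) by (unfold Pf; ring).
  assert (L2 : Lf z1 z2 (- m1) (- m2) = - Lf z1 z2 m1 m2) by (unfold Lf; ring).
  assert (G2 : Gf z1 z2 (- m1) (- m2) = - Gf z1 z2 m1 m2) by (unfold Gf; ring).
  assert (e1 : exp (-2 * PI * (Qf t1 t12 t2 m1 m2 + Lf z1 z2 m1 m2)) = E * exp (- s)).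
  { unfold E, s. rewrite <- exp_plus. f_equal. ring. }
  assert (e2 : exp (-2 * PI * (Qf t1 t12 t2 m1 m2 + - Lf z1 z2 m1 m2)) = E * exp s).
  { unfold E, s. rewrite <- exp_plus. f_equal. ring. }
  assert (a1 : 2 * PI * (Pf t1 t12 t2 m1 m2 + Gf z1 z2 m1 m2 + m2 / 2)
               = al + g + (IZR n2 * PI + PI / 2)).
  { unfold al, g, m2. field. }
  assert (a2 : 2 * PI * (Pf t1 t12 t2 m1 m2 + - Gf z1 z2 m1 m2 + - m2 / 2)
               = al - g - (IZR n2 * PI + PI / 2)).
  { unfold al, g, m2. field. }
  unfold Bd, TT, Cmod, Cadd, Cre, Cim. simpl fst; simpl snd.
  rewrite Q2, P2, L2, G2, e1, e2, a1, a2.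
  replace (2 * PI * - Lf z1 z2 m1 m2) with (- s) by (unfold s; ring).
  replace (2 * PI * - Gf z1 z2 m1 m2) with (- g) by (unfold g; ring).
  rewrite !Rabs_Ropp. fold s g. exact H.
Qed.


Lemma distZ_bounds (r : R) : 0 <= r <= 1 ->
  0 <= distZ r /\ distZ r <= r /\ distZ r <= 1 - r.
Proof.
  intros Hr. destruct (base_Int_part r) as [H1 H2].
  assert (Hz : (Int_part r = 0 \/ Int_part r = 1)%Z).
  { assert (-1 < IZR (Int_part r)) by lra. assert (IZR (Int_part r) < 2) by lra.
    apply lt_IZR in H. apply lt_IZR in H0. lia. }
  unfold distZ. destruct Hz as [Hz|Hz]; rewrite Hz in *.
  - unfold Rmin; destruct (Rle_dec _ _); lra.
  - assert (r = 1) by lra. subst. unfold Rmin; destruct (Rle_dec _ _); lra.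
Qed.

Lemma exp_nat (a : R) (k : nat) : exp (a * INR k) = exp a ^ k.
Proof.
  induction k. simpl. rewrite Rmult_0_r. apply exp_0.
  rewrite S_INR. replace (a * (INR k + 1)) with (a * INR k + a) by ring.
  rewrite exp_plus, IHk. simpl. ring.
Qed.

Lemma exp_m54 : exp (- (5/4)) <= 1/3.
Proof.
  assert (H : 3 <= exp (5/4)).
  { replace (5/4) with (1/4 * INR 5) by (simpl; field). rewrite exp_nat.
    pose proof (exp_ineq1_le (1/4)).
    assert (5/4 <= exp (1/4)) by lra.
    assert ((5/4) ^ 5 <= exp (1/4) ^ 5) by (apply pow_incr; lra). lra. }
  rewrite exp_Ropp. pose proof (exp_pos (5/4)).
  apply (Rmult_le_reg_l (exp (5/4))); auto. rewrite Rinv_r by lra. lra.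
Qed.

Lemma INR_le_sq (j : nat) : INR j <= INR j * INR j.
Proof. destruct j. simpl; lra. pose proof (pos_INR j). rewrite S_INR. nra. Qed.



Lemma exp_third (x kap : R) (k : nat) : 5/4 <= kap -> INR k <= x ->
  exp (- kap * x) <= (1/3) ^ k.
Proof.
  intros Hk Hx. pose proof (pos_INR k).
  apply Rle_trans with (exp (- (5/4) * INR k)).
  - assert (- kap * x <= - (5/4) * INR k) by nra.
    destruct H0. left; apply exp_increasing; auto. rewrite H0; lra.
  - rewrite exp_nat. apply pow_incr. split. left; apply exp_pos. apply exp_m54.
Qed.

Lemma geom1 n : sumn (fun k => (1/3) ^ k) n = 3/2 - 3/2 * (1/3) ^ n.
Proof. induction n; simpl sumn. simpl; field. rewrite IHn. simpl. field. Qed.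

Lemma geom2 n : sumn (fun k => (INR k + 1) * (1/3) ^ k) n
  = 9/4 - (3/2 * INR n + 9/4) * (1/3) ^ n.
Proof. induction n; simpl sumn. simpl; field. rewrite IHn, S_INR. simpl. field. Qed.

Lemma geom1_le n : sumn (fun k => (1/3) ^ k) n <= 3/2.
Proof. rewrite geom1. pose proof (pow_le (1/3) n). lra. Qed.

Lemma geom2_le n : sumn (fun k => (INR k + 1) * (1/3) ^ k) n <= 9/4.
Proof.
  rewrite geom2. pose proof (pow_le (1/3) n). pose proof (pos_INR n).
  assert (0 <= (3/2 * INR n + 9/4) * (1/3) ^ n) by (apply Rmult_le_pos; lra). lra.
Qed.

Definition f1d (kap y d : R) (N i : nat) : R :=
  exp (- kap * ((INR i - INR N + (1/2 + y)) ^ 2 - d ^ 2)).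

Lemma one_dim (kap y : R) (N : nat) : 5/4 <= kap -> -1/2 <= y <= 1/2 ->
  let d := distZ (1/2 + y) in
  sumn (f1d kap y d N) (N + N) <= 3 /\
  sumn (fun i => Rabs (INR i - INR N + 1/2) * f1d kap y d N i) (N + N) <= 9/2.
Proof.
  intros Hk Hy d. destruct (distZ_bounds (1/2 + y)) as [D0 [D1 D2]]; [lra|]. fold d in D0, D1, D2.
  assert (Lo : forall j, (j < N)%nat ->
    f1d kap y d N (N - 1 - j) <= (1/3) ^ j /\
    Rabs (INR (N - 1 - j) - INR N + 1/2) * f1d kap y d N (N - 1 - j) <= (INR j + 1) * (1/3) ^ j).
  { intros j Hj. assert (E : INR (N - 1 - j) - INR N = - INR j - 1).
    { rewrite !minus_INR by lia. simpl. ring. }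
    unfold f1d. rewrite E. pose proof (pos_INR j). pose proof (INR_le_sq j).
    assert (H1 : exp (- kap * ((- INR j - 1 + (1 / 2 + y)) ^ 2 - d ^ 2)) <= (1/3) ^ j).
    { apply exp_third; auto. nra. }
    split; auto.
    rewrite Rabs_left by lra.
    apply Rmult_le_compat; try lra. left; apply exp_pos. }
  assert (Hi : forall j, (j < N)%nat ->
    f1d kap y d N (N + j) <= (1/3) ^ j /\
    Rabs (INR (N + j) - INR N + 1/2) * f1d kap y d N (N + j) <= (INR j + 1) * (1/3) ^ j).
  { intros j Hj. assert (E : INR (N + j) - INR N = INR j) by (rewrite plus_INR; ring).
    unfold f1d. rewrite E. pose proof (pos_INR j). pose proof (INR_le_sq j).
    assert (H1 : exp (- kap * ((INR j + (1 / 2 + y)) ^ 2 - d ^ 2)) <= (1/3) ^ j).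
    { apply exp_third; auto. nra. }
    split; auto.
    rewrite Rabs_right by lra.
    apply Rmult_le_compat; try lra. left; apply exp_pos. }
  rewrite !sumn_split. rewrite (sumn_rev (f1d kap y d N)).
  rewrite (sumn_rev (fun i => Rabs (INR i - INR N + 1/2) * f1d kap y d N i)).
  split.
  - pose proof (geom1_le N).
    assert (sumn (fun i => f1d kap y d N (N - 1 - i)) N <= sumn (fun k => (1/3) ^ k) N)
      by (apply sumn_le; intros; apply Lo; auto).
    assert (sumn (fun i => f1d kap y d N (N + i)) N <= sumn (fun k => (1/3) ^ k) N)
      by (apply sumn_le; intros; apply Hi; auto). lra.
  - pose proof (geom2_le N).
    assert (sumn (fun i => Rabs (INR (N - 1 - i) - INR N + 1/2) * f1d kap y d N (N - 1 - i)) N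
            <= sumn (fun k => (INR k + 1) * (1/3) ^ k) N)
      by (apply sumn_le; intros; apply Lo; auto).
    assert (sumn (fun i => Rabs (INR (N + i) - INR N + 1/2) * f1d kap y d N (N + i)) N
            <= sumn (fun k => (INR k + 1) * (1/3) ^ k) N)
      by (apply sumn_le; intros; apply Hi; auto). lra.
Qed.


Lemma abs_bnd (a b : R) : Rabs a <= b -> - b <= a <= b.
Proof. intros. pose proof (Rle_abs a). pose proof (Rle_abs (-a)). rewrite Rabs_Ropp in *. lra. Qed.

Lemma abs_lin (m1 m2 p1 p2 B1 B2 : R) : Rabs p1 <= B1 -> Rabs p2 <= B2 ->
  Rabs (m1 * p1 + m2 * p2) <= Rabs m1 * B1 + Rabs m2 * B2.
Proof.
  intros H1 H2. eapply Rle_trans. apply Rabs_triang. rewrite !Rabs_mult.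
  pose proof (Rabs_pos m1); pose proof (Rabs_pos m2); pose proof (Rabs_pos p1); pose proof (Rabs_pos p2).
  apply Rplus_le_compat; apply Rmult_le_compat_l; auto.
Qed.

Lemma abs_comb (y1 y2 c1 c2 n : R) : Rabs y1 <= n -> Rabs y2 <= n -> Rabs c1 <= c1 -> Rabs c2 <= c2 ->
  Rabs (y1 * c1 + y2 * c2) <= n * c1 + n * c2.
Proof.
  intros H1 H2 H3 H4. eapply Rle_trans. apply Rabs_triang. rewrite !Rabs_mult.
  pose proof (Rabs_pos y1); pose proof (Rabs_pos y2); pose proof (Rabs_pos c1); pose proof (Rabs_pos c2).
  apply Rplus_le_compat; apply Rmult_le_compat; lra.
Qed.

Lemma dist_le (k r d : R) : (0 <= k \/ k <= -1) -> d <= r -> d <= 1 - r -> 0 <= d ->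
  d ^ 2 <= (k + r) ^ 2.
Proof. intros [H|H] H1 H2 H3; nra. Qed.

Lemma quad_bound (b1 b12 b2 u1 u2 d1 d2 del : R) :
  0 <= 2 * b12 -> 2 * b12 <= b1 -> b1 <= b2 ->
  0 <= del -> del <= d1 -> del <= d2 -> d1 ^ 2 <= u1 ^ 2 -> d2 ^ 2 <= u2 ^ 2 ->
  (b1 + b2 - 2 * b12) * del ^ 2 + b1 / 2 * (u1 ^ 2 - d1 ^ 2) + b1 / 2 * (u2 ^ 2 - d2 ^ 2)
  <= b1 * u1 ^ 2 + 2 * b12 * u1 * u2 + b2 * u2 ^ 2.
Proof.
  intros. assert (0 <= b12 * (u1 + u2) ^ 2) by (apply Rmult_le_pos; [lra | apply pow2_ge_0]).
  assert (del ^ 2 <= d1 ^ 2) by nra. assert (del ^ 2 <= d2 ^ 2) by nra.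
  assert (0 <= (b1 / 2 - b12) * (u1 ^ 2 - del ^ 2)) by (apply Rmult_le_pos; lra).
  assert (0 <= (b2 - b12 - b1 / 2) * (u2 ^ 2 - del ^ 2)) by (apply Rmult_le_pos; lra).
  assert (0 <= b1 / 2 * (d1 ^ 2 - del ^ 2)) by (apply Rmult_le_pos; lra).
  assert (0 <= b1 / 2 * (d2 ^ 2 - del ^ 2)) by (apply Rmult_le_pos; lra).
  assert (E : b1 * u1 ^ 2 + 2 * b12 * u1 * u2 + b2 * u2 ^ 2 -
   ((b1 + b2 - 2 * b12) * del ^ 2 + b1 / 2 * (u1 ^ 2 - d1 ^ 2) + b1 / 2 * (u2 ^ 2 - d2 ^ 2))
   = b12 * (u1 + u2) ^ 2 + (b1 / 2 - b12) * (u1 ^ 2 - del ^ 2) + (b2 - b12 - b1 / 2) * (u2 ^ 2 - del ^ 2)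
     + b1 / 2 * (d1 ^ 2 - del ^ 2) + b1 / 2 * (d2 ^ 2 - del ^ 2)) by field.
  lra.
Qed.


Definition Fb (b1 b12 b2 y1 y2 n d1 d2 del : R) (k1 k2 : R) : R :=
  2 * PI * n * exp (PI * (b1 * y1 ^ 2 + 2 * b12 * y1 * y2 + b2 * y2 ^ 2))
  * exp (- PI * ((b1 + b2 - 2 * b12) * del ^ 2))
  * ((2 * (b1 + b12) + 2) * Rabs (k1 + 1/2) + (2 * (b12 + b2) + 2) * Rabs (k2 + 1/2))
  * (exp (- (PI * b1 / 2) * ((k1 + (1/2 + y1)) ^ 2 - d1 ^ 2))
     * exp (- (PI * b1 / 2) * ((k2 + (1/2 + y2)) ^ 2 - d2 ^ 2))).

Lemma Bd_bound (t1 t12 t2 : Cx) (x1 x2 y1 y2 n k1 k2 d1 d2 del : R) :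
  0 <= 2 * Cim t12 -> 2 * Cim t12 <= Cim t1 -> Cim t1 <= Cim t2 ->
  Rabs (Cre t1) <= 1/2 -> Rabs (Cre t12) <= 1/2 -> Rabs (Cre t2) <= 1/2 ->
  Rabs x1 <= n -> Rabs x2 <= n -> Rabs y1 <= n -> Rabs y2 <= n ->
  0 <= del -> del <= d1 -> del <= d2 ->
  d1 <= 1/2 + y1 -> d1 <= 1 - (1/2 + y1) -> 0 <= d1 ->
  d2 <= 1/2 + y2 -> d2 <= 1 - (1/2 + y2) -> 0 <= d2 ->
  (0 <= k1 \/ k1 <= -1) -> (0 <= k2 \/ k2 <= -1) ->
  let z1 := Cadd (RtoC x1) (Cadd (Cscal y1 t1) (Cscal y2 t12)) in
  let z2 := Cadd (RtoC x2) (Cadd (Cscal y1 t12) (Cscal y2 t2)) in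
  Bd t1 t12 t2 z1 z2 (k1 + 1/2) (k2 + 1/2)
  <= Fb (Cim t1) (Cim t12) (Cim t2) y1 y2 n d1 d2 del k1 k2.
Proof.
  intros H12a H12b H2 HR1 HR12 HR2 Hx1 Hx2 Hy1 Hy2 Hd0 Hd1 Hd2 D11 D12 D13 D21 D22 D23 Hk1 Hk2 z1 z2.
  set (b1 := Cim t1). set (b12 := Cim t12). set (b2 := Cim t2).
  fold b1 b12 b2 in H12a, H12b, H2.
  assert (HPI := PI_RGT_0).
  assert (Hn : 0 <= n) by (pose proof (Rabs_pos x1); lra).
  assert (Iz1 : Cim z1 = y1 * b1 + y2 * b12) by (unfold z1, b1, b12, Cadd, Cscal, RtoC, Cim; simpl; ring).
  assert (Iz2 : Cim z2 = y1 * b12 + y2 * b2) by (unfold z2, b12, b2, Cadd, Cscal, RtoC, Cim; simpl; ring).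
  assert (Rz1 : Cre z1 = x1 + (y1 * Cre t1 + y2 * Cre t12)) by (unfold z1, Cadd, Cscal, RtoC, Cre; simpl; ring).
  assert (Rz2 : Cre z2 = x2 + (y1 * Cre t12 + y2 * Cre t2)) by (unfold z2, Cadd, Cscal, RtoC, Cre; simpl; ring).
  set (m1 := k1 + 1/2). set (m2 := k2 + 1/2).
  assert (aI1 : Rabs (Cim z1) <= n * b1 + n * b12).
  { rewrite Iz1. apply abs_comb; auto; rewrite Rabs_right; lra. }
  assert (aI2 : Rabs (Cim z2) <= n * b12 + n * b2).
  { rewrite Iz2. apply abs_comb; auto; rewrite Rabs_right; lra. }
  assert (aR1 : Rabs (Cre z1) <= 2 * n).
  { rewrite Rz1. eapply Rle_trans. apply Rabs_triang.
    assert (Rabs (y1 * Cre t1 + y2 * Cre t12) <= Rabs y1 * (1/2) + Rabs y2 * (1/2)) by (apply abs_lin; auto).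
    pose proof (Rabs_pos y1); pose proof (Rabs_pos y2). lra. }
  assert (aR2 : Rabs (Cre z2) <= 2 * n).
  { rewrite Rz2. eapply Rle_trans. apply Rabs_triang.
    assert (Rabs (y1 * Cre t12 + y2 * Cre t2) <= Rabs y1 * (1/2) + Rabs y2 * (1/2)) by (apply abs_lin; auto).
    pose proof (Rabs_pos y1); pose proof (Rabs_pos y2). lra. }
  assert (aL : Rabs (Lf z1 z2 m1 m2) <= Rabs m1 * (n * b1 + n * b12) + Rabs m2 * (n * b12 + n * b2))
    by (unfold Lf; apply abs_lin; auto).
  assert (aG : Rabs (Gf z1 z2 m1 m2) <= Rabs m1 * (2 * n) + Rabs m2 * (2 * n))
    by (unfold Gf; apply abs_lin; auto).
  assert (Ha : 2 * Rabs (2 * PI * Lf z1 z2 m1 m2) + Rabs (2 * PI * Gf z1 z2 m1 m2)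
               <= 2 * PI * n * ((2 * (b1 + b12) + 2) * Rabs m1 + (2 * (b12 + b2) + 2) * Rabs m2)).
  { rewrite (Rabs_mult (2 * PI) (Lf z1 z2 m1 m2)), (Rabs_mult (2 * PI) (Gf z1 z2 m1 m2)). rewrite (Rabs_right (2 * PI)) by lra.
    pose proof (Rabs_pos m1); pose proof (Rabs_pos m2).
    replace (2 * PI * n * ((2 * (b1 + b12) + 2) * Rabs m1 + (2 * (b12 + b2) + 2) * Rabs m2))
      with (2 * PI * (2 * (Rabs m1 * (n * b1 + n * b12) + Rabs m2 * (n * b12 + n * b2))
                      + (Rabs m1 * (2 * n) + Rabs m2 * (2 * n)))) by ring.
    assert (2 * Rabs (Lf z1 z2 m1 m2) + Rabs (Gf z1 z2 m1 m2) <=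
            2 * (Rabs m1 * (n * b1 + n * b12) + Rabs m2 * (n * b12 + n * b2))
                      + (Rabs m1 * (2 * n) + Rabs m2 * (2 * n))) by lra.
    nra. }
  set (u1 := k1 + (1/2 + y1)). set (u2 := k2 + (1/2 + y2)).
  assert (Hq := quad_bound b1 b12 b2 u1 u2 d1 d2 del H12a H12b H2 Hd0 Hd1 Hd2
                 (dist_le k1 (1/2 + y1) d1 Hk1 D11 D12 D13) (dist_le k2 (1/2 + y2) d2 Hk2 D21 D22 D23)).
  assert (Eq : -2 * PI * (Qf t1 t12 t2 m1 m2 + Lf z1 z2 m1 m2)
     = PI * (b1 * y1 ^ 2 + 2 * b12 * y1 * y2 + b2 * y2 ^ 2) - PI * (b1 * u1 ^ 2 + 2 * b12 * u1 * u2 + b2 * u2 ^ 2)).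
  { unfold Qf, Lf. rewrite Iz1, Iz2. unfold u1, u2, m1, m2. fold b1 b12 b2. field. }
  assert (Hb : exp (-2 * PI * (Qf t1 t12 t2 m1 m2 + Lf z1 z2 m1 m2))
     <= exp (PI * (b1 * y1 ^ 2 + 2 * b12 * y1 * y2 + b2 * y2 ^ 2))
        * exp (- PI * ((b1 + b2 - 2 * b12) * del ^ 2))
        * (exp (- (PI * b1 / 2) * (u1 ^ 2 - d1 ^ 2)) * exp (- (PI * b1 / 2) * (u2 ^ 2 - d2 ^ 2)))).
  { rewrite <- !exp_plus. rewrite Eq.
    assert (PI * ((b1 + b2 - 2 * b12) * del ^ 2 + b1 / 2 * (u1 ^ 2 - d1 ^ 2) + b1 / 2 * (u2 ^ 2 - d2 ^ 2))
            <= PI * (b1 * u1 ^ 2 + 2 * b12 * u1 * u2 + b2 * u2 ^ 2)) by (apply Rmult_le_compat_l; lra).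
    match goal with |- exp ?a <= exp ?b => assert (a <= b) end.
    { replace (- (PI * b1 / 2) * (u1 ^ 2 - d1 ^ 2)) with (- PI * (b1 / 2 * (u1 ^ 2 - d1 ^ 2))) by field.
      replace (- (PI * b1 / 2) * (u2 ^ 2 - d2 ^ 2)) with (- PI * (b1 / 2 * (u2 ^ 2 - d2 ^ 2))) by field.
      lra. }
    destruct H0. left; apply exp_increasing; auto. rewrite H0; lra. }
  unfold Bd, Fb. fold b1 b12 b2 m1 m2 u1 u2.
  replace (2 * PI * n * exp (PI * (b1 * y1 ^ 2 + 2 * b12 * y1 * y2 + b2 * y2 ^ 2)) *
   exp (- PI * ((b1 + b2 - 2 * b12) * del ^ 2)) *
   ((2 * (b1 + b12) + 2) * Rabs m1 + (2 * (b12 + b2) + 2) * Rabs m2) *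
   (exp (- (PI * b1 / 2) * (u1 ^ 2 - d1 ^ 2)) * exp (- (PI * b1 / 2) * (u2 ^ 2 - d2 ^ 2))))
   with ((2 * PI * n * ((2 * (b1 + b12) + 2) * Rabs m1 + (2 * (b12 + b2) + 2) * Rabs m2)) *
    (exp (PI * (b1 * y1 ^ 2 + 2 * b12 * y1 * y2 + b2 * y2 ^ 2)) *
   exp (- PI * ((b1 + b2 - 2 * b12) * del ^ 2)) *
   (exp (- (PI * b1 / 2) * (u1 ^ 2 - d1 ^ 2)) * exp (- (PI * b1 / 2) * (u2 ^ 2 - d2 ^ 2))))) by ring.
  apply Rmult_le_compat; auto.
  - pose proof (Rabs_pos (2 * PI * Lf z1 z2 m1 m2)); pose proof (Rabs_pos (2 * PI * Gf z1 z2 m1 m2)); lra.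
  - left; apply exp_pos.
Qed.


Lemma double_rev (F : nat -> nat -> R) M :
  sumn (fun i => sumn (fun j => F i j) M) M
  = sumn (fun i => sumn (fun j => F (M - 1 - i)%nat (M - 1 - j)%nat) M) M.
Proof.
  rewrite sumn_rev. apply sumn_ext. intros i Hi. rewrite sumn_rev. reflexivity.
Qed.

Lemma double_plus (F G : nat -> nat -> R) M :
  sumn (fun i => sumn (fun j => F i j + G i j) M) M
  = sumn (fun i => sumn (fun j => F i j) M) M + sumn (fun i => sumn (fun j => G i j) M) M.
Proof.
  rewrite <- sumn_plus. apply sumn_ext. intros. apply sumn_plus.
Qed.

Lemma double_le (F G : nat -> nat -> R) M :
  (forall i j, (i < M)%nat -> (j < M)%nat -> F i j <= G i j) ->
  sumn (fun i => sumn (fun j => F i j) M) M <= sumn (fun i => sumn (fun j => G i j) M) M.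
Proof. intros H. apply sumn_le. intros. apply sumn_le. intros. apply H; auto. Qed.

Lemma double_sep (C c1 c2 : R) (w f v g : nat -> R) n :
  sumn (fun i => sumn (fun j => C * (c1 * w i + c2 * v j) * (f i * g j)) n) n
  = C * (c1 * sumn (fun i => w i * f i) n * sumn g n + c2 * sumn f n * sumn (fun j => v j * g j) n).
Proof.
  rewrite (sumn_ext _ (fun i => (C * c1 * sumn g n) * (w i * f i) + (C * c2 * sumn (fun j => v j * g j) n) * f i)).
  - rewrite sumn_plus, !sumn_scal. ring.
  - intros i Hi.
    rewrite (sumn_ext _ (fun j => (C * c1 * w i * f i) * g j + (C * c2 * f i) * (v j * g j))).
    + rewrite sumn_plus, !sumn_scal. ring.
    + intros; ring.
Qed.

Lemma sqrt_double (a b : R) : sqrt ((2 * a) ^ 2 + (2 * b) ^ 2) = 2 * sqrt (a ^ 2 + b ^ 2).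
Proof.
  replace ((2 * a) ^ 2 + (2 * b) ^ 2) with (2 ^ 2 * (a ^ 2 + b ^ 2)) by ring.
  rewrite sqrt_mult by nra. rewrite sqrt_pow2 by lra. reflexivity.
Qed.

Lemma Z_refl (N i : nat) : (i < 2 * N)%nat ->
  IZR (Z.of_nat (2 * N - 1 - i) - Z.of_nat N) + 1/2 = - (IZR (Z.of_nat i - Z.of_nat N) + 1/2).
Proof.
  intros H. assert (E : (Z.of_nat (2 * N - 1 - i) - Z.of_nat N = - (Z.of_nat i - Z.of_nat N) - 1)%Z) by lia.
  rewrite E, minus_IZR, opp_IZR. field.
Qed.

Lemma IZR_cases (z : Z) : 0 <= IZR z \/ IZR z <= -1.
Proof.
  destruct (Z_lt_le_dec z 0).
  - right. apply IZR_le. lia.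
  - left. apply IZR_le. lia.
Qed.

Lemma IZR_nat (i N : nat) : IZR (Z.of_nat i - Z.of_nat N) = INR i - INR N.
Proof. rewrite minus_IZR, <- !INR_IZR_INZ. reflexivity. Qed.

Lemma partial_bound (t1 t12 t2 : Cx) (x1 x2 y1 y2 n : R) (N : nat) :
  17/20 <= Cim t1 ->
  0 <= 2 * Cim t12 -> 2 * Cim t12 <= Cim t1 -> Cim t1 <= Cim t2 ->
  Rabs (Cre t1) <= 1/2 -> Rabs (Cre t12) <= 1/2 -> Rabs (Cre t2) <= 1/2 ->
  Rabs x1 <= n -> Rabs x2 <= n -> Rabs y1 <= n -> Rabs y2 <= n ->
  -1/2 <= y1 <= 1/2 -> -1/2 <= y2 <= 1/2 ->
  let d1 := distZ (1/2 + y1) in let d2 := distZ (1/2 + y2) in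
  let del := Rmin d1 d2 in
  let b1 := Cim t1 in let b12 := Cim t12 in let b2 := Cim t2 in
  let z1 := Cadd (RtoC x1) (Cadd (Cscal y1 t1) (Cscal y2 t12)) in
  let z2 := Cadd (RtoC x2) (Cadd (Cscal y1 t12) (Cscal y2 t2)) in
  let T := fun i j => theta_term (1/2) (1/2) 0 (1/2) z1 z2 t1 t12 t2
                        (Z.of_nat i - Z.of_nat N) (Z.of_nat j - Z.of_nat N) in
  sqrt ((sumn (fun i => sumn (fun j => Cre (T i j)) (2 * N)) (2 * N)) ^ 2
        + (sumn (fun i => sumn (fun j => Cim (T i j)) (2 * N)) (2 * N)) ^ 2)
  <= 2 * PI * n * exp (PI * (b1 * y1 ^ 2 + 2 * b12 * y1 * y2 + b2 * y2 ^ 2))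
     * exp (- PI * ((b1 + b2 - 2 * b12) * del ^ 2))
     * (27/2 * ((2 * (b1 + b12) + 2) + (2 * (b12 + b2) + 2))).
Proof.
  intros Hb1 H12a H12b H2 HR1 HR12 HR2 Hx1 Hx2 Hy1 Hy2 Y1 Y2 d1 d2 del b1 b12 b2 z1 z2 T.
  destruct (distZ_bounds (1/2 + y1)) as [D10 [D11 D12]]; [lra|].
  destruct (distZ_bounds (1/2 + y2)) as [D20 [D21 D22]]; [lra|].
  fold d1 in D10, D11, D12. fold d2 in D20, D21, D22.
  assert (Hdel0 : 0 <= del) by (unfold del, Rmin; destruct (Rle_dec d1 d2); lra).
  assert (Hdel1 : del <= d1) by (unfold del; apply Rmin_l).
  assert (Hdel2 : del <= d2) by (unfold del; apply Rmin_r).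
  set (M := (2 * N)%nat).
  set (k := fun i : nat => IZR (Z.of_nat i - Z.of_nat N)).
  set (BB := fun i j => Bd t1 t12 t2 z1 z2 (k i + 1/2) (k j + 1/2)).
  assert (HT : forall i j, T i j = TT t1 t12 t2 z1 z2 (k i + 1/2) (k j + 1/2))
    by (intros; unfold T, k; apply theta_term_TT).
  assert (HTr : forall i j, (i < M)%nat -> (j < M)%nat ->
      T (M - 1 - i)%nat (M - 1 - j)%nat = TT t1 t12 t2 z1 z2 (- (k i + 1/2)) (- (k j + 1/2))).
  { intros i j Hi Hj. rewrite HT. unfold k, M. rewrite !Z_refl by lia. reflexivity. }
  assert (HBr : forall i j, (i < M)%nat -> (j < M)%nat ->
      BB (M - 1 - i)%nat (M - 1 - j)%nat = Bd t1 t12 t2 z1 z2 (- (k i + 1/2)) (- (k j + 1/2))).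
  { intros i j Hi Hj. unfold BB, k, M. rewrite !Z_refl by lia. reflexivity. }
  assert (Hpair : forall i j, (i < M)%nat -> (j < M)%nat ->
     sqrt ((Cre (T i j) + Cre (T (M - 1 - i)%nat (M - 1 - j)%nat)) ^ 2
         + (Cim (T i j) + Cim (T (M - 1 - i)%nat (M - 1 - j)%nat)) ^ 2)
     <= BB i j + BB (M - 1 - i)%nat (M - 1 - j)%nat).
  { intros i j Hi Hj. rewrite HBr, HTr, HT by auto. unfold BB.
    pose proof (TT_pair t1 t12 t2 z1 z2 (k i + 1/2) (Z.of_nat j - Z.of_nat N)) as P.
    simpl in P. unfold Cmod, Cadd in P. simpl in P. exact P. }
  assert (Hterm : forall i j, (i < M)%nat -> (j < M)%nat ->
     BB i j <= Fb b1 b12 b2 y1 y2 n d1 d2 del (INR i - INR N) (INR j - INR N)).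
  { intros i j Hi Hj. unfold BB. rewrite <- !IZR_nat. unfold k.
    apply Bd_bound; auto; try lra; apply IZR_cases. }
  set (SR := sumn (fun i => sumn (fun j => Cre (T i j)) M) M).
  set (SI := sumn (fun i => sumn (fun j => Cim (T i j)) M) M).
  assert (ER : 2 * SR = sumn (fun i => sumn (fun j => Cre (T i j) + Cre (T (M - 1 - i)%nat (M - 1 - j)%nat)) M) M).
  { rewrite double_plus. unfold SR. rewrite <- (double_rev (fun i j => Cre (T i j))). ring. }
  assert (EI : 2 * SI = sumn (fun i => sumn (fun j => Cim (T i j) + Cim (T (M - 1 - i)%nat (M - 1 - j)%nat)) M) M).
  { rewrite double_plus. unfold SI. rewrite <- (double_rev (fun i j => Cim (T i j))). ring. }
  assert (Hmain : 2 * sqrt (SR ^ 2 + SI ^ 2) <= 2 * sumn (fun i => sumn (fun j => BB i j) M) M).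
  { rewrite <- sqrt_double, ER, EI.
    eapply Rle_trans. apply mod_sum.
    eapply Rle_trans. apply sumn_le. intros i Hi. apply mod_sum.
    apply Rle_trans with (sumn (fun i => sumn (fun j => BB i j + BB (M-1-i)%nat (M-1-j)%nat) M) M).
    apply double_le. intros i j Hi Hj. apply Hpair; auto.
    rewrite double_plus. rewrite <- (double_rev BB). lra. }
  assert (Hm2 : sqrt (SR ^ 2 + SI ^ 2) <= sumn (fun i => sumn (fun j => BB i j) M) M) by lra.
  eapply Rle_trans. apply Hm2.
  eapply Rle_trans. apply double_le. intros i j Hi Hj. apply Hterm; auto.
  unfold Fb.
  set (kap := PI * b1 / 2).
  assert (Hkap : 5/4 <= kap) by (unfold kap, b1; pose proof PI2_3_2; nra).
  destruct (one_dim kap y1 N Hkap Y1) as [S1 W1].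
  destruct (one_dim kap y2 N Hkap Y2) as [S2 W2].
  fold d1 in S1, W1. fold d2 in S2, W2.
  unfold M. replace (2 * N)%nat with (N + N)%nat by lia.
  rewrite (double_sep _ _ _ (fun i => Rabs (INR i - INR N + 1/2)) (f1d kap y1 d1 N)
                           (fun j => Rabs (INR j - INR N + 1/2)) (f1d kap y2 d2 N)).
  set (C := 2 * PI * n * exp (PI * (b1 * y1 ^ 2 + 2 * b12 * y1 * y2 + b2 * y2 ^ 2))
        * exp (- PI * ((b1 + b2 - 2 * b12) * del ^ 2))).
  assert (HC : 0 <= C).
  { unfold C. pose proof PI_RGT_0. assert (0 <= n) by (pose proof (Rabs_pos x1); lra).
    pose proof (exp_pos (PI * (b1 * y1 ^ 2 + 2 * b12 * y1 * y2 + b2 * y2 ^ 2))).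
    pose proof (exp_pos (- PI * ((b1 + b2 - 2 * b12) * del ^ 2))).
    apply Rmult_le_pos; [apply Rmult_le_pos|]; try lra. apply Rmult_le_pos; lra. }
  apply Rmult_le_compat_l; auto.
  assert (P1 : 0 <= sumn (f1d kap y1 d1 N) (N + N)) by (apply sumn_nonneg; intros; unfold f1d; left; apply exp_pos).
  assert (P2 : 0 <= sumn (f1d kap y2 d2 N) (N + N)) by (apply sumn_nonneg; intros; unfold f1d; left; apply exp_pos).
  assert (P3 : 0 <= sumn (fun i => Rabs (INR i - INR N + 1/2) * f1d kap y1 d1 N i) (N + N))
    by (apply sumn_nonneg; intros; apply Rmult_le_pos; [apply Rabs_pos | unfold f1d; left; apply exp_pos]).
  assert (P4 : 0 <= sumn (fun i => Rabs (INR i - INR N + 1/2) * f1d kap y2 d2 N i) (N + N))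
    by (apply sumn_nonneg; intros; apply Rmult_le_pos; [apply Rabs_pos | unfold f1d; left; apply exp_pos]).
  assert (c1p : 0 <= 2 * (b1 + b12) + 2) by (unfold b1, b12; lra).
  assert (c2p : 0 <= 2 * (b12 + b2) + 2) by (unfold b2, b12; lra).
  set (A1 := sumn (fun i => Rabs (INR i - INR N + 1/2) * f1d kap y1 d1 N i) (N + N)) in *.
  set (A2 := sumn (fun i => Rabs (INR i - INR N + 1/2) * f1d kap y2 d2 N i) (N + N)) in *.
  set (F1 := sumn (f1d kap y1 d1 N) (N + N)) in *.
  set (F2 := sumn (f1d kap y2 d2 N) (N + N)) in *.
  assert (A1 * F2 <= 9/2 * 3) by (apply Rmult_le_compat; lra).
  assert (F1 * A2 <= 3 * (9/2)) by (apply Rmult_le_compat; lra).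
  set (c1 := 2 * (b1 + b12) + 2) in *. set (c2 := 2 * (b12 + b2) + 2) in *.
  assert (c1 * (A1 * F2) <= c1 * (9/2 * 3)) by (apply Rmult_le_compat_l; lra).
  assert (c2 * (F1 * A2) <= c2 * (3 * (9/2))) by (apply Rmult_le_compat_l; lra).
  lra.
Qed.


Lemma sumn_abs (f : nat -> R) n : Rabs (sumn f n) <= sumn (fun i => Rabs (f i)) n.
Proof.
  induction n; simpl. rewrite Rabs_R0; lra.
  eapply Rle_trans. apply Rabs_triang. lra.
Qed.

Lemma sumn_const (c : R) n : sumn (fun _ => c) n = INR n * c.
Proof. induction n; simpl sumn. simpl; ring. rewrite IHn, S_INR. ring. Qed.

Lemma cv_zero (r : nat -> R) (c : R) : 0 <= c ->
  (forall N, Rabs (r N) <= (4 * INR N + 1) * c / (1 + INR N ^ 2)) -> Un_cv r 0.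
Proof.
  intros Hc H eps Heps.
  destruct (INR_unbounded (5 * c / eps)) as [N0 HN0].
  exists (S N0). intros N HN. unfold Rdist. rewrite Rminus_0_r.
  assert (HN1 : INR (S N0) <= INR N) by (apply le_INR; lia).
  rewrite S_INR in HN1.
  assert (Hpos : 0 < INR N) by (pose proof (pos_INR N0); lra).
  eapply Rle_lt_trans. apply H.
  assert (5 * c / eps * eps = 5 * c) by (field; lra).
  assert (5 * c < INR N * eps) by nra.
  apply Rle_lt_trans with (5 * c / INR N).
  - unfold Rdiv. apply Rmult_le_reg_r with ((1 + INR N ^ 2) * INR N).
    + nra.
    + replace ((4 * INR N + 1) * c * / (1 + INR N ^ 2) * ((1 + INR N ^ 2) * INR N))
        with ((4 * INR N + 1) * c * INR N) by (field; nra).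
      replace (5 * c * / INR N * ((1 + INR N ^ 2) * INR N)) with (5 * c * (1 + INR N ^ 2)) by (field; lra).
      assert (INR N <= 1 + INR N ^ 2) by nra. nra.
  - apply (Rmult_lt_reg_r (INR N)); auto. unfold Rdiv. rewrite Rmult_assoc, Rinv_l by lra. lra.
Qed.

Lemma lim_bound (a b : nat -> R) (A B K : R) : Un_cv a A -> Un_cv b B -> 0 <= K ->
  (forall N, sqrt (a N ^ 2 + b N ^ 2) <= K) -> sqrt (A ^ 2 + B ^ 2) <= K.
Proof.
  intros Ha Hb HK H. apply sqrt_le_sq; auto.
  assert (Hc : Un_cv (fun N => a N * a N + b N * b N) (A * A + B * B))
    by (apply CV_plus; apply CV_mult; auto).
  assert (Hk : Un_cv (fun _ => K ^ 2) (K ^ 2)).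
  { intros e He. exists 0%nat. intros. unfold Rdist. rewrite Rminus_diag, Rabs_R0. lra. }
  replace (A ^ 2 + B ^ 2) with (A * A + B * B) by ring.
  refine (Rle_cv_lim _ Hc Hk). intros N.
  specialize (H N). assert (Hx : 0 <= a N * a N + b N * b N) by nra.
  pose proof (sqrt_sqrt _ Hx). pose proof (sqrt_pos (a N * a N + b N * b N)).
  replace (a N ^ 2 + b N ^ 2) with (a N * a N + b N * b N) in H by ring. nra.
Qed.

Lemma Un_cv_ext (u v : nat -> R) l : (forall n, u n = v n) -> Un_cv u l -> Un_cv v l.
Proof. intros E H e He. destruct (H e He) as [N HN]. exists N. intros n Hn. rewrite <- E. auto. Qed.

Lemma generic_lim (a : nat -> nat -> nat -> R) (c L : R) : 0 <= c ->
  (forall N i j, (i = 2 * N \/ j = 2 * N)%nat -> Rabs (a N i j) <= c / (1 + INR N ^ 2)) ->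
  Un_cv (fun N => sumn (fun i => sumn (fun j => a N i j) (S (2 * N))) (S (2 * N))) L ->
  Un_cv (fun N => sumn (fun i => sumn (fun j => a N i j) (2 * N)) (2 * N)) L.
Proof.
  intros Hc Hb Hcv.
  set (r := fun N => sumn (fun i => a N i (2 * N)%nat) (2 * N) + sumn (fun j => a N (2 * N)%nat j) (S (2 * N))).
  assert (Hr : Un_cv r 0).
  { apply (cv_zero r c Hc). intros N. unfold r.
    eapply Rle_trans. apply Rabs_triang.
    assert (H1 : Rabs (sumn (fun i => a N i (2 * N)%nat) (2 * N)) <= INR (2 * N) * (c / (1 + INR N ^ 2))).
    { eapply Rle_trans. apply sumn_abs. rewrite <- sumn_const. apply sumn_le. intros. apply Hb. auto. }
    assert (H2 : Rabs (sumn (fun j => a N (2 * N)%nat j) (S (2 * N))) <= INR (S (2 * N)) * (c / (1 + INR N ^ 2))).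
    { eapply Rle_trans. apply sumn_abs. rewrite <- sumn_const. apply sumn_le. intros. apply Hb. auto. }
    rewrite S_INR, mult_INR in H2. rewrite mult_INR in H1. simpl INR in H1, H2.
    assert (0 < 1 + INR N ^ 2) by (pose proof (pow2_ge_0 (INR N)); lra).
    replace ((4 * INR N + 1) * c / (1 + INR N ^ 2)) with
      ((1 + 1) * INR N * (c / (1 + INR N ^ 2)) + ((1 + 1) * INR N + 1) * (c / (1 + INR N ^ 2))) by (field; lra).
    lra. }
  pose proof (CV_minus _ _ _ _ Hcv Hr) as H. rewrite Rminus_0_r in H.
  refine (Un_cv_ext _ _ _ _ H).
  intros N. unfold r. cbn [sumn].
  rewrite (sumn_plus (fun i => sumn (fun j => a N i j) (2 * N)) (fun i => a N i (2 * N)%nat)). ring.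
Qed.


Lemma edge_bound (t1 t12 t2 : Cx) (x1 x2 y1 y2 : R) (N i j : nat) :
  17/20 <= Cim t1 -> 0 <= 2 * Cim t12 -> 2 * Cim t12 <= Cim t1 -> Cim t1 <= Cim t2 ->
  -1/2 <= y1 <= 1/2 -> -1/2 <= y2 <= 1/2 ->
  (i = 2 * N \/ j = 2 * N)%nat ->
  let z1 := Cadd (RtoC x1) (Cadd (Cscal y1 t1) (Cscal y2 t12)) in
  let z2 := Cadd (RtoC x2) (Cadd (Cscal y1 t12) (Cscal y2 t2)) in
  let c := exp (PI * (Cim t1 * y1 ^ 2 + 2 * Cim t12 * y1 * y2 + Cim t2 * y2 ^ 2)) in
  let th := theta_term (1/2) (1/2) 0 (1/2) z1 z2 t1 t12 t2
              (Z.of_nat i - Z.of_nat N) (Z.of_nat j - Z.of_nat N) in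
  Rabs (Cre th) <= c / (1 + INR N ^ 2) /\ Rabs (Cim th) <= c / (1 + INR N ^ 2).
Proof.
  intros Hb1 H12a H12b H2 Y1 Y2 Hij z1 z2 c th.
  unfold th. rewrite theta_term_TT.
  set (m1 := IZR (Z.of_nat i - Z.of_nat N) + 1/2).
  set (m2 := IZR (Z.of_nat j - Z.of_nat N) + 1/2).
  set (EE := exp (-2 * PI * (Qf t1 t12 t2 m1 m2 + Lf z1 z2 m1 m2))).
  assert (Iz1 : Cim z1 = y1 * Cim t1 + y2 * Cim t12) by (unfold z1, Cadd, Cscal, RtoC, Cim; simpl; ring).
  assert (Iz2 : Cim z2 = y1 * Cim t12 + y2 * Cim t2) by (unfold z2, Cadd, Cscal, RtoC, Cim; simpl; ring).
  set (b1 := Cim t1) in *. set (b12 := Cim t12) in *. set (b2 := Cim t2) in *.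
  set (u1 := m1 + y1). set (u2 := m2 + y2).
  assert (Eq : -2 * PI * (Qf t1 t12 t2 m1 m2 + Lf z1 z2 m1 m2)
     = PI * (b1 * y1 ^ 2 + 2 * b12 * y1 * y2 + b2 * y2 ^ 2) - PI * (b1 * u1 ^ 2 + 2 * b12 * u1 * u2 + b2 * u2 ^ 2)).
  { unfold Qf, Lf. rewrite Iz1, Iz2. unfold u1, u2. fold b1 b12 b2. field. }
  assert (Hq := quad_bound b1 b12 b2 u1 u2 0 0 0 H12a H12b H2 (Rle_refl 0) (Rle_refl 0) (Rle_refl 0)
                 ltac:(nra) ltac:(nra)).
  assert (HN : INR N ^ 2 <= u1 ^ 2 + u2 ^ 2).
  { pose proof (pos_INR N).
    destruct Hij as [Hi|Hj].
    - assert (E : IZR (Z.of_nat i - Z.of_nat N) = INR N) by (rewrite IZR_nat, Hi, mult_INR; simpl; ring).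
      unfold u1, m1. rewrite E. nra.
    - assert (E : IZR (Z.of_nat j - Z.of_nat N) = INR N) by (rewrite IZR_nat, Hj, mult_INR; simpl; ring).
      unfold u2, m2. rewrite E. nra. }
  assert (HPI := PI2_3_2).
  assert (HEE : EE <= c / (1 + INR N ^ 2)).
  { unfold EE. rewrite Eq. unfold c. fold b1 b12 b2.
    set (q := b1 * y1 ^ 2 + 2 * b12 * y1 * y2 + b2 * y2 ^ 2).
    assert (Hle : PI * q - PI * (b1 * u1 ^ 2 + 2 * b12 * u1 * u2 + b2 * u2 ^ 2) <= PI * q + - (INR N ^ 2)).
    { assert (INR N ^ 2 <= PI * (b1 * u1 ^ 2 + 2 * b12 * u1 * u2 + b2 * u2 ^ 2)); [|lra].
      assert (b1 / 2 * (INR N ^ 2) <= b1 * u1 ^ 2 + 2 * b12 * u1 * u2 + b2 * u2 ^ 2).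
      { assert (b1 / 2 * INR N ^ 2 <= b1 / 2 * (u1 ^ 2 + u2 ^ 2)) by (apply Rmult_le_compat_l; lra). nra. }
      pose proof (pow2_ge_0 (INR N)).
      set (V := b1 * u1 ^ 2 + 2 * b12 * u1 * u2 + b2 * u2 ^ 2) in *.
      assert (17/40 * INR N ^ 2 <= V) by nra.
      assert (3 * V <= PI * V) by (apply Rmult_le_compat_r; lra). lra. }
    apply Rle_trans with (exp (PI * q + - (INR N ^ 2))).
    { destruct Hle as [Hl|Hl]. left; apply exp_increasing; auto. rewrite Hl; lra. }
    rewrite exp_plus, exp_Ropp. pose proof (exp_ineq1_le (INR N ^ 2)).
    pose proof (exp_pos (PI * q)). pose proof (pow2_ge_0 (INR N)).
    unfold Rdiv. apply Rmult_le_compat_l; [lra|]. apply Rinv_le_contravar; lra. }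
  assert (HEp : 0 < EE) by apply exp_pos.
  unfold TT, Cre, Cim. fold m1 m2. simpl fst; simpl snd. fold EE.
  rewrite !Rabs_mult, (Rabs_right EE) by lra.
  pose proof (COS_bound (2 * PI * (Pf t1 t12 t2 m1 m2 + Gf z1 z2 m1 m2 + m2 / 2))).
  pose proof (SIN_bound (2 * PI * (Pf t1 t12 t2 m1 m2 + Gf z1 z2 m1 m2 + m2 / 2))).
  split.
  - assert (Rabs (cos (2 * PI * (Pf t1 t12 t2 m1 m2 + Gf z1 z2 m1 m2 + m2 / 2))) <= 1) by (apply Rabs_le; lra). nra.
  - assert (Rabs (sin (2 * PI * (Pf t1 t12 t2 m1 m2 + Gf z1 z2 m1 m2 + m2 / 2))) <= 1) by (apply Rabs_le; lra). nra.
Qed.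


Lemma ln_le' (a b : R) : 0 < a -> a <= b -> ln a <= ln b.
Proof. intros Ha [H|H]. left; apply ln_increasing; auto. rewrite H; lra. Qed.

Lemma C3_lb (y1 y2 : R) : 54 * PI <= C3 y1 y2.
Proof.
  unfold C3. apply Rle_trans with (C3_one y1); [|apply Rmax_l].
  unfold C3_one. pose proof PI_RGT_0. pose proof PI_4.
  assert (H8 : 2 <= 8 / PI) by (apply (Rmult_le_reg_r PI); auto; unfold Rdiv; rewrite Rmult_assoc, Rinv_l by lra; lra).
  assert (H4 : 1 <= 4 / PI) by (apply (Rmult_le_reg_r PI); auto; unfold Rdiv; rewrite Rmult_assoc, Rinv_l by lra; lra).
  assert (Hs : 7/5 <= sqrt (y1 ^ 2 + 8 / PI)).
  { rewrite <- (sqrt_pow2 (7/5)) by lra. apply sqrt_le_1_alt. pose proof (pow2_ge_0 y1). lra. }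
  pose proof (Rabs_pos y1).
  assert (6.75 <= 4 / PI + 2 * Rabs y1 + 1 / 2 * (sqrt (y1 ^ 2 + 8 / PI) + 2) ^ 2 + 1 / 2) by nra.
  nra.
Qed.

Lemma Sp4_b1 (t1 t12 t2 : Cx) : in_F2 t1 t12 t2 -> 17/20 <= Cim t1.
Proof.
  intros [[H0 _] [Hsp [_ [HR1 _]]]].
  assert (Hs : is_Sp4Z (mkM2Z 0 0 0 1) (mkM2Z (-1) 0 0 0) (mkM2Z 1 0 0 0) (mkM2Z 0 0 0 1))
    by (unfold is_Sp4Z; repeat split; reflexivity).
  specialize (Hsp _ _ _ _ Hs).
  assert (E : Cmod (det_Ctau_D (mkM2Z 1 0 0 0) (mkM2Z 0 0 0 1) t1 t12 t2) = sqrt (Cre t1 ^ 2 + Cim t1 ^ 2)).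
  { unfold det_Ctau_D, Cmod, Csub, Cmul, Cadd, RtoC, Cre, Cim. simpl. f_equal. ring. }
  rewrite E in Hsp.
  assert (Hx : 0 <= Cre t1 ^ 2 + Cim t1 ^ 2) by nra.
  pose proof (sqrt_sqrt _ Hx). pose proof (sqrt_pos (Cre t1 ^ 2 + Cim t1 ^ 2)).
  assert (1 <= Cre t1 ^ 2 + Cim t1 ^ 2) by nra.
  pose proof (Rle_abs (Cre t1)); pose proof (Rle_abs (- Cre t1)). rewrite Rabs_Ropp in *.
  assert (Cre t1 ^ 2 <= 1/4) by nra.
  nra.
Qed.


Theorem mainTheorem10 (t1 t12 t2 : Cx) (x1 x2 y1 y2 : R) (th : Cx) :
  in_F2 t1 t12 t2 ->
  (x1, x2, y1, y2) <> (0, 0, 0, 0) ->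
  Rmax (Rmax (Rabs x1) (Rabs x2)) (Rmax (Rabs y1) (Rabs y2)) <= 1/2 ->
  (* Z = X + tau Y *)
  let z1 := Cadd (RtoC x1) (Cadd (Cscal y1 t1) (Cscal y2 t12)) in
  let z2 := Cadd (RtoC x2) (Cadd (Cscal y1 t12) (Cscal y2 t2)) in
  (* th = theta_{a,b}(Z, tau) with a = (1/2, 1/2), b = (0, 1/2) *)
  is_theta (1/2) (1/2) 0 (1/2) z1 z2 t1 t12 t2 th ->
  th <> (0, 0) ->
  let Lambda := - ln (Cmod th * exp (- PI * imZ_quad t1 t12 t2 (Cim z1) (Cim z2))) in
  let nXY := Rmax (Rmax (Rabs x1) (Rabs x2)) (Rmax (Rabs y1) (Rabs y2)) in
  let delta := Rmin (distZ (1/2 + y1)) (distZ (1/2 + y2)) in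
  let trB := Cim t1 + Cim t2 in
  Lambda >= PI * (trB - 2 * Cim t12) * delta ^ 2
            - ln (4 + 3/2 * trB) + ln (1 / nXY) - ln (C3 y1 y2).
Proof.
  intros HF Hne Hn z1 z2 Hth Hth0 Lambda nXY delta trB.
  pose proof (Sp4_b1 _ _ _ HF) as Hb1.
  destruct HF as [[HH1 HH2] [_ [[H12a [H12b H2]] [HR1 [HR12 HR2]]]]].
  set (n := nXY) in *.
  assert (Hx1 : Rabs x1 <= n) by (unfold n, nXY; eapply Rle_trans; [apply Rmax_l|]; apply Rmax_l).
  assert (Hx2 : Rabs x2 <= n) by (unfold n, nXY; eapply Rle_trans; [apply Rmax_r|]; apply Rmax_l).
  assert (Hy1 : Rabs y1 <= n) by (unfold n, nXY; eapply Rle_trans; [apply Rmax_l|]; apply Rmax_r).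
  assert (Hy2 : Rabs y2 <= n) by (unfold n, nXY; eapply Rle_trans; [apply Rmax_r|]; apply Rmax_r).
  fold nXY in Hn. fold n in Hn.
  assert (Hnpos : 0 < n).
  { destruct (Req_dec x1 0) as [e1|e1]; [destruct (Req_dec x2 0) as [e2|e2]; [destruct (Req_dec y1 0) as [e3|e3]; [destruct (Req_dec y2 0) as [e4|e4]|]|]|].
    - exfalso. apply Hne. rewrite e1, e2, e3, e4. reflexivity.
    - pose proof (Rabs_pos_lt y2 e4); lra.
    - pose proof (Rabs_pos_lt y1 e3); lra.
    - pose proof (Rabs_pos_lt x2 e2); lra.
    - pose proof (Rabs_pos_lt x1 e1); lra. }
  assert (Y1 : -1/2 <= y1 <= 1/2) by (pose proof (Rle_abs y1); pose proof (Rle_abs (-y1)); rewrite Rabs_Ropp in *; lra).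
  assert (Y2 : -1/2 <= y2 <= 1/2) by (pose proof (Rle_abs y2); pose proof (Rle_abs (-y2)); rewrite Rabs_Ropp in *; lra).
  set (b1 := Cim t1) in *. set (b12 := Cim t12) in *. set (b2 := Cim t2) in *.
  set (q := b1 * y1 ^ 2 + 2 * b12 * y1 * y2 + b2 * y2 ^ 2).
  assert (Iz1 : Cim z1 = y1 * b1 + y2 * b12) by (unfold z1, b1, b12, Cadd, Cscal, RtoC, Cim; simpl; ring).
  assert (Iz2 : Cim z2 = y1 * b12 + y2 * b2) by (unfold z2, b12, b2, Cadd, Cscal, RtoC, Cim; simpl; ring).
  assert (Hq : imZ_quad t1 t12 t2 (Cim z1) (Cim z2) = q).
  { unfold imZ_quad. rewrite Iz1, Iz2. fold b1 b12 b2. unfold q. field. lra. }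
  set (K := 2 * PI * n * exp (PI * q) * exp (- PI * ((b1 + b2 - 2 * b12) * delta ^ 2))
     * (27/2 * ((2 * (b1 + b12) + 2) + (2 * (b12 + b2) + 2)))).
  set (T := fun N i j => theta_term (1/2) (1/2) 0 (1/2) z1 z2 t1 t12 t2
                        (Z.of_nat i - Z.of_nat N) (Z.of_nat j - Z.of_nat N)).
  assert (Hpart : forall N, sqrt ((sumn (fun i => sumn (fun j => Cre (T N i j)) (2 * N)) (2 * N)) ^ 2
        + (sumn (fun i => sumn (fun j => Cim (T N i j)) (2 * N)) (2 * N)) ^ 2) <= K).
  { intros N. exact (partial_bound t1 t12 t2 x1 x2 y1 y2 n N Hb1 H12a H12b H2 HR1 HR12 HR2 Hx1 Hx2 Hy1 Hy2 Y1 Y2). }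
  assert (Hedge : forall N i j, (i = 2 * N \/ j = 2 * N)%nat ->
     Rabs (Cre (T N i j)) <= exp (PI * q) / (1 + INR N ^ 2) /\ Rabs (Cim (T N i j)) <= exp (PI * q) / (1 + INR N ^ 2)).
  { intros N i j Hij. exact (edge_bound t1 t12 t2 x1 x2 y1 y2 N i j Hb1 H12a H12b H2 Y1 Y2 Hij). }
  assert (Hpre : forall N, Cre (theta_partial (1/2) (1/2) 0 (1/2) z1 z2 t1 t12 t2 N)
                 = sumn (fun i => sumn (fun j => Cre (T N i j)) (S (2 * N))) (S (2 * N))
               /\ Cim (theta_partial (1/2) (1/2) 0 (1/2) z1 z2 t1 t12 t2 N)
                 = sumn (fun i => sumn (fun j => Cim (T N i j)) (S (2 * N))) (S (2 * N))).
  { intros N. unfold theta_partial, Cre at 1, Cim at 1. cbn zeta. cbn [fst snd].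
    rewrite !sum_f_R0_sumn. split; apply sumn_ext; intros; rewrite sum_f_R0_sumn; reflexivity. }
  destruct Hth as [HcR HcI].
  assert (CR : Un_cv (fun N => sumn (fun i => sumn (fun j => Cre (T N i j)) (2 * N)) (2 * N)) (Cre th)).
  { apply (generic_lim (fun N i j => Cre (T N i j)) (exp (PI * q))).
    - left; apply exp_pos.
    - intros. apply Hedge; auto.
    - refine (Un_cv_ext _ _ _ _ HcR). intros N. apply Hpre. }
  assert (CI : Un_cv (fun N => sumn (fun i => sumn (fun j => Cim (T N i j)) (2 * N)) (2 * N)) (Cim th)).
  { apply (generic_lim (fun N i j => Cim (T N i j)) (exp (PI * q))).
    - left; apply exp_pos.
    - intros. apply Hedge; auto.
    - refine (Un_cv_ext _ _ _ _ HcI). intros N. apply Hpre. }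
  assert (HK0 : 0 <= K).
  { specialize (Hpart 0%nat). eapply Rle_trans; [apply sqrt_pos | apply Hpart]. }
  assert (Hmod : Cmod th <= K) by (apply (lim_bound _ _ _ _ K CR CI HK0 Hpart)).
  assert (Hmpos : 0 < Cmod th).
  { unfold Cmod. apply sqrt_lt_R0.
    destruct (Req_dec (Cre th) 0) as [ea|ea]; destruct (Req_dec (Cim th) 0) as [eb|eb].
    - exfalso; apply Hth0. destruct th as [a b]. unfold Cre, Cim in *. simpl in *. rewrite ea, eb. reflexivity.
    - pose proof (Rsqr_pos_lt _ eb). unfold Rsqr in *. nra.
    - pose proof (Rsqr_pos_lt _ ea). unfold Rsqr in *. nra.
    - pose proof (Rsqr_pos_lt _ ea). unfold Rsqr in *. nra. }
  unfold Lambda. rewrite Hq.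
  set (Ed := exp (- PI * ((b1 + b2 - 2 * b12) * delta ^ 2))).
  assert (HEd : 0 < Ed) by apply exp_pos.
  assert (HC3 := C3_lb y1 y2).
  assert (HPI := PI_RGT_0).
  assert (Htr : trB = b1 + b2) by reflexivity.
  set (Bnd := n * (4 + 3/2 * trB) * C3 y1 y2 * Ed).
  assert (HA : Cmod th * exp (- PI * q) <= Bnd).
  { apply Rle_trans with (K * exp (- PI * q)).
    { apply Rmult_le_compat_r; auto. left; apply exp_pos. }
    assert (Eexp : exp (PI * q) * exp (- PI * q) = 1).
    { rewrite <- exp_plus. replace (PI * q + - PI * q) with 0 by ring. apply exp_0. }
    replace (K * exp (- PI * q)) with
      (2 * PI * n * Ed * (27/2 * ((2 * (b1 + b12) + 2) + (2 * (b12 + b2) + 2))) * (exp (PI * q) * exp (- PI * q)))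
      by (unfold K, Ed; ring).
    rewrite Eexp, Rmult_1_r. unfold Bnd. rewrite Htr.
    assert (Hc : 27/2 * ((2 * (b1 + b12) + 2) + (2 * (b12 + b2) + 2)) <= 27/2 * (4 + 3 * (b1 + b2))) by lra.
    assert (Hc2 : 2 * PI * (27/2 * (4 + 3 * (b1 + b2))) <= (4 + 3/2 * (b1 + b2)) * C3 y1 y2).
    { assert (54 * PI * (4 + 3/2 * (b1 + b2)) <= (4 + 3/2 * (b1 + b2)) * C3 y1 y2)
        by (rewrite Rmult_comm; apply Rmult_le_compat_l; lra). nra. }
    assert (0 <= n * Ed) by nra.
    assert (2 * PI * (27/2 * ((2 * (b1 + b12) + 2) + (2 * (b12 + b2) + 2)))
            <= (4 + 3/2 * (b1 + b2)) * C3 y1 y2) by nra.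
    replace (2 * PI * n * Ed * (27/2 * ((2 * (b1 + b12) + 2) + (2 * (b12 + b2) + 2))))
      with ((n * Ed) * (2 * PI * (27/2 * ((2 * (b1 + b12) + 2) + (2 * (b12 + b2) + 2))))) by ring.
    replace (n * (4 + 3/2 * (b1 + b2)) * C3 y1 y2 * Ed) with ((n * Ed) * ((4 + 3/2 * (b1 + b2)) * C3 y1 y2)) by ring.
    apply Rmult_le_compat_l; auto. }
  assert (HApos : 0 < Cmod th * exp (- PI * q)) by (apply Rmult_lt_0_compat; auto; apply exp_pos).
  pose proof (ln_le' _ _ HApos HA) as Hln.
  assert (Htrp : 0 < 4 + 3/2 * trB) by (rewrite Htr; lra).
  assert (HC3p : 0 < C3 y1 y2) by lra.
  unfold Bnd in Hln. rewrite !ln_mult in Hln; try lra; try (apply Rmult_lt_0_compat; lra);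
    try (repeat apply Rmult_lt_0_compat; lra).
  unfold Ed in Hln. rewrite !ln_exp in Hln.
  replace (1 / n) with (/ n) by (field; lra). rewrite ln_Rinv by lra.
  rewrite ln_mult, ln_exp by (auto; apply exp_pos).
  rewrite Htr. rewrite Htr in Hln. apply Rle_ge.
  replace (PI * (b1 + b2 - 2 * b12) * delta ^ 2) with (- (- PI * ((b1 + b2 - 2 * b12) * delta ^ 2))) by ring.
  lra. apply exp_pos.
Qed.
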